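(* Let $n\ge1$. There are constants $C>0$ and $\delta_0>0$ depending only on $n$ such that for every $0<\delta<\delta_0$: (a) a complex symmetric $n\times n$ matrix $B$ lies in $M_\delta^+$ if and only if $\langle Bx,x\rangle\in N_\delta^+$ for every nonzero $x\in\mathbb R^n$; (b) if $h\in E_\delta$ and $0\ne x\in\mathbb R^n$, then $h^Tx\in V_{C\delta}$; (c) if $z\in V_\delta$, $z\ne0$, then $\langle z,z\rangle\in N_{C\delta}^+$; (d) if $h\in E_\delta$, then $hh^T\in M_{C\delta}^+$; (e) if $A\in M_\delta$ and $|B-I|<\delta$, then $AB\in M_{C\delta}$ and $BA\in M_{C\delta}$; (f) if $A\in M_\delta$ and $B\in SO(n,\mathbb R)$, then $AB\in M_{C\delta}$ and $BA\in M_{C\delta}$.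
   Context: $\langle u,v\rangle=\sum_j u_jv_j$ (bilinear). $|\cdot|$ is the Euclidean norm on vectors and the operator norm on matrices. Writing $z=x+iy$ with $x,y$ real: $N_\delta^+=\{z\in\mathbb C:|y|<\delta x\}$; $V_\delta=\{z\in\mathbb C^n:|y|<\delta|x|\}$; $M_\delta=\{z\in{\rm Mat}(n,\mathbb C):|y|<\delta|x|\}$; $M_\delta^+=\{z\in{\rm Mat}(n,\mathbb C): z^T=z,\ \delta x+y \text{ and } \delta x-y \text{ positive definite}\}$. $E_\delta=\{gp: g\in{\rm Mat}(n,\mathbb R),\ \det g>0,\ p\in GL(n,\mathbb C),\ |p-I|<\delta\}$. The paper's convention is that writing ''$w\in V_\delta$'' in a conclusion means $w\in V_\epsilon$ with $\epsilon=O(\delta)$; this has been made explicit via the constant $C$. *)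

(* Defs.v *)
From HB Require Import structures.
From mathcomp Require Import all_boot all_order all_algebra.
From mathcomp Require Import complex.
From mathcomp Require Import classical_sets reals.
Set Implicit Arguments. Unset Strict Implicit. Unset Printing Implicit Defensive.
Import Order.TTheory GRing.Theory Num.Theory.
Local Open Scope ring_scope.
Local Open Scope classical_set_scope.

Section Defs.
Variable R : realType.
Local Notation C := (complex R).

Definition cR (r : R) : C := Complex r 0.
Definition cmx m n (X : 'M[R]_(m, n)) : 'M[C]_(m, n) := map_mx cR X.
Definition Remx m n (Z : 'M[C]_(m, n)) : 'M[R]_(m, n) := map_mx (@complex.Re R) Z.
Definition Immx m n (Z : 'M[C]_(m, n)) : 'M[R]_(m, n) := map_mx (@complex.Im R) Z.

Definition rvnorm n (v : 'cV[R]_n) : R := Num.sqrt (\sum_i v i 0 ^+ 2).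
Definition cvnorm n (v : 'cV[C]_n) : R :=
  Num.sqrt (\sum_i (complex.Re (v i 0) ^+ 2 + complex.Im (v i 0) ^+ 2)).

Definition ropnorm m n (A : 'M[R]_(m, n)) : R :=
  sup [set rvnorm (A *m v) | v in [set v : 'cV[R]_n | rvnorm v = 1]].
Definition copnorm m n (A : 'M[C]_(m, n)) : R :=
  sup [set cvnorm (A *m v) | v in [set v : 'cV[C]_n | cvnorm v = 1]].

Definition bil n (u v : 'cV[C]_n) : C := \sum_j u j 0 * v j 0.

Definition Nplus (d : R) : set C := [set z | `|complex.Im z| < d * complex.Re z].
Definition Vd n (d : R) : set 'cV[C]_n :=
  [set z | rvnorm (Immx z) < d * rvnorm (Remx z)].
Definition Md n (d : R) : set 'M[C]_n :=
  [set z | ropnorm (Immx z) < d * ropnorm (Remx z)].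

Definition posdef n (A : 'M[R]_n) : Prop :=
  forall v : 'cV[R]_n, v != 0 -> 0 < (v^T *m A *m v) 0 0.

Definition Mplus n (d : R) : set 'M[C]_n :=
  [set z | z^T = z /\ posdef (d *: Remx z + Immx z)
                  /\ posdef (d *: Remx z - Immx z)].

Definition Ed n (d : R) : set 'M[C]_n :=
  [set h | exists (g : 'M[R]_n) (p : 'M[C]_n),
      [/\ 0 < \det g, p \in unitmx, copnorm (p - 1%:M) < d & h = cmx g *m p]].

Definition SOn n : set 'M[R]_n := [set B | B^T *m B = 1%:M /\ \det B = 1].

End Defs.

(* Main.v *)
Require Import Defs.
From HB Require Import structures.
From mathcomp Require Import all_boot all_order all_algebra.
From mathcomp Require Import complex.
From mathcomp Require Import classical_sets reals ring lra.
Import Order.TTheory GRing.Theory Num.Theory.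
Local Open Scope ring_scope.
Set Implicit Arguments. Unset Strict Implicit.

Section Basic.
Variable R : realType.

Lemma CS (I : finType) (f g : I -> R) :
  (\sum_i f i * g i) ^+ 2 <= (\sum_i f i ^+ 2) * (\sum_i g i ^+ 2).
Proof.
set F := \sum_i f i ^+ 2; set S := \sum_i f i * g i; set G := \sum_i g i ^+ 2.
have H t : 0 <= t ^+ 2 * F - 2 * t * S + G.
  have -> : t ^+ 2 * F - 2 * t * S + G = \sum_i (t * f i - g i) ^+ 2.
    rewrite (eq_bigr (fun i => t ^+ 2 * f i ^+ 2 - (2 * t) * (f i * g i) + g i ^+ 2));
      last by move=> i _; ring.
    by rewrite big_split sumrB /= -!mulr_sumr.
  by apply: sumr_ge0 => i _; exact: sqr_ge0.
have F0 : 0 <= F by apply: sumr_ge0 => i _; exact: sqr_ge0.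
have G0 : 0 <= G by apply: sumr_ge0 => i _; exact: sqr_ge0.
case: (ltrP 0 F) => Fp.
  have := H (S / F); set u := S / F => Hu.
  have SE : S = u * F by rewrite /u divfK // gt_eqF.
  rewrite SE; rewrite SE in Hu; nra.
have F00 : F = 0 by apply/eqP; rewrite eq_le Fp F0.
have f0 : forall i, f i = 0.
  move=> i; apply/eqP; rewrite -sqrf_eq0; apply/eqP.
  by apply: (psumr_eq0P (P := predT) (fun i _ => sqr_ge0 (f i)) F00).
rewrite F00 mul0r /S big1 ?expr0n //.
by move=> i _; rewrite f0 mul0r.
Qed.

Definition dot n (u v : 'cV[R]_n) : R := \sum_i u i 0 * v i 0.

Lemma nr_ge0 n (v : 'cV[R]_n) : 0 <= rvnorm v.
Proof. exact: sqrtr_ge0. Qed.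

Lemma nr_sq n (v : 'cV[R]_n) : rvnorm v ^+ 2 = \sum_i v i 0 ^+ 2.
Proof. by rewrite sqr_sqrtr // sumr_ge0 // => i _; exact: sqr_ge0. Qed.

Lemma nr_dot n (v : 'cV[R]_n) : rvnorm v ^+ 2 = dot v v.
Proof. by rewrite nr_sq /dot; apply: eq_bigr => i _; rewrite expr2. Qed.

Lemma dot_le n (u v : 'cV[R]_n) : `|dot u v| <= rvnorm u * rvnorm v.
Proof.
rewrite -sqrtr_sqr /rvnorm -sqrtrM ?sumr_ge0 // => [|i _]; last exact: sqr_ge0.
by apply: ler_wsqrtr; exact: CS.
Qed.

Lemma nr_eq0 n (v : 'cV[R]_n) : rvnorm v = 0 -> v = 0.
Proof.
move=> h; have : rvnorm v ^+ 2 = 0 by rewrite h expr0n.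
rewrite nr_sq => h2; apply/matrixP => i j; rewrite ord1 mxE.
apply/eqP; rewrite -sqrf_eq0; apply/eqP.
exact: (psumr_eq0P (P := predT) (fun i _ => sqr_ge0 (v i 0)) h2).
Qed.

Lemma nr_gt0 n (v : 'cV[R]_n) : v != 0 -> 0 < rvnorm v.
Proof.
move=> h; rewrite lt_neqAle nr_ge0 andbT; apply/eqP => e.
by move: h; rewrite (nr_eq0 (esym e)) eqxx.
Qed.

Lemma nr_le n (u v : 'cV[R]_n) : rvnorm u ^+ 2 <= rvnorm v ^+ 2 -> rvnorm u <= rvnorm v.
Proof.
by move=> h; rewrite -(ler_pXn2r (n := 2)) // ?nnegrE ?nr_ge0.
Qed.

Lemma nrD n (u v : 'cV[R]_n) : rvnorm (u + v) <= rvnorm u + rvnorm v.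
Proof.
rewrite -(ler_pXn2r (n := 2)) // ?nnegrE ?nr_ge0 ?addr_ge0 ?nr_ge0 //.
rewrite nr_dot.
have -> : dot (u + v) (u + v) = dot u u + 2 * dot u v + dot v v.
  rewrite /dot mulr_sumr -!big_split /=; apply: eq_bigr => i _; rewrite !mxE; ring.
rewrite -!nr_dot.
have := dot_le u v; have := ler_norm (dot u v); nra.
Qed.

Lemma nrZ n a (v : 'cV[R]_n) : rvnorm (a *: v) = `|a| * rvnorm v.
Proof.
rewrite /rvnorm -sqrtr_sqr -sqrtrM ?sqr_ge0 // mulr_sumr; congr Num.sqrt.
by apply: eq_bigr => i _; rewrite mxE; ring.
Qed.

Lemma nrN n (v : 'cV[R]_n) : rvnorm (- v) = rvnorm v.
Proof. by rewrite -scaleN1r nrZ normrN normr1 mul1r. Qed.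

Lemma nrB n (u v : 'cV[R]_n) : rvnorm u - rvnorm v <= rvnorm (u + v).
Proof.
have := nrD (u + v) (- v); rewrite addrK nrN; lra.
Qed.


Lemma nr0 n : rvnorm (0 : 'cV[R]_n) = 0.
Proof. by rewrite -(scale0r (0 : 'cV[R]_n)) nrZ normr0 mul0r. Qed.

Lemma nr_normalize n (v : 'cV[R]_n) : v != 0 -> rvnorm ((rvnorm v)^-1 *: v) = 1.
Proof.
move=> h; have p := nr_gt0 h.
by rewrite nrZ ger0_norm ?invr_ge0 ?nr_ge0 // mulVf // gt_eqF.
Qed.

Lemma rbound m n (A : 'M[R]_(m, n)) :
  exists K, 0 <= K /\ forall v, rvnorm (A *m v) <= K * rvnorm v.
Proof.
set K := Num.sqrt (\sum_i \sum_j A i j ^+ 2).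
have K0 : 0 <= K by exact: sqrtr_ge0.
exists K; split => // v.
rewrite -(ler_pXn2r (n := 2)) // ?nnegrE ?mulr_ge0 ?nr_ge0 //.
have S0 : 0 <= \sum_i \sum_j A i j ^+ 2.
  by apply: sumr_ge0 => i _; apply: sumr_ge0 => j _; exact: sqr_ge0.
rewrite exprMn nr_sq nr_sq /K sqr_sqrtr // mulr_suml; apply: ler_sum => i _.
rewrite mxE; have := CS (fun j => A i j) (fun j => v j 0); by [].
Qed.

Lemma sup_ub_gen (T : Type) (S : set T) (f : T -> R) K x :
  (forall t, S t -> f t <= K) -> S x -> f x <= sup [set f t | t in S].
Proof.
move=> hK Sx; apply: ub_le_sup; last by exists x.
by exists K => y [t St <-]; exact: hK.
Qed.

Lemma rop_ub m n (A : 'M[R]_(m, n)) v : rvnorm (A *m v) <= ropnorm A * rvnorm v.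
Proof.
have [->|vn0] := eqVneq v 0; first by rewrite mulmx0 !nr0 mulr0.
have p := nr_gt0 vn0.
have [K [K0 HK]] := rbound A.
have : rvnorm (A *m ((rvnorm v)^-1 *: v)) <= ropnorm A.
  rewrite /ropnorm; apply: (sup_ub_gen (f := fun t => rvnorm (A *m t)) (K := K)); last by rewrite /= nr_normalize.
  by move=> t /= ht; rewrite -[K]mulr1 -ht; apply: HK.
rewrite -scalemxAr nrZ ger0_norm ?invr_ge0 ?nr_ge0 // => h.
by rewrite -ler_pdivrMr // mulrC.
Qed.

Lemma unit_exists n : (0 < n)%N -> exists v : 'cV[R]_n, rvnorm v = 1.
Proof.
move=> hn; exists ((rvnorm (const_mx 1 : 'cV[R]_n))^-1 *: const_mx 1).
apply: nr_normalize; apply/negP => /eqP /matrixP /(_ (Ordinal hn) 0).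
by rewrite !mxE => /eqP; rewrite oner_eq0.
Qed.

Lemma rop_le m n (A : 'M[R]_(m, n)) K : (0 < n)%N ->
  (forall v, rvnorm (A *m v) <= K * rvnorm v) -> ropnorm A <= K.
Proof.
move=> hn hK; have [u hu] := unit_exists hn.
apply: ge_sup; first by exists (rvnorm (A *m u)); exists u.
by move=> y [t /= ht <-]; rewrite -[K]mulr1 -ht.
Qed.

Lemma rop_ge0 m n (A : 'M[R]_(m, n)) : (0 < n)%N -> 0 <= ropnorm A.
Proof.
move=> hn; have [u hu] := unit_exists hn.
have := rop_ub A u; rewrite hu mulr1; apply: le_trans; exact: nr_ge0.
Qed.

Lemma dot_tr n (M : 'M[R]_n) u w : dot (M^T *m u) w = dot u (M *m w).
Proof.
rewrite /dot; under eq_bigr => i _ do rewrite mxE mulr_suml.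
under [RHS]eq_bigr => i _ do rewrite mxE mulr_sumr.
rewrite exchange_big; apply: eq_bigr => i _; apply: eq_bigr => j _; rewrite mxE; ring.
Qed.

Lemma rop_tr n (M : 'M[R]_n) u : (0 < n)%N -> rvnorm (M^T *m u) <= ropnorm M * rvnorm u.
Proof.
move=> hn; set t := M^T *m u.
have e : rvnorm t ^+ 2 = dot u (M *m t) by rewrite nr_dot {1}/t dot_tr.
have h1 := dot_le u (M *m t).
have h2 := rop_ub M t.
have h3 := ler_norm (dot u (M *m t)).
have t0 := nr_ge0 t; have u0 := nr_ge0 u.
have [tz|tp] := eqVneq (rvnorm t) 0.
  by rewrite tz; apply: mulr_ge0 => //; exact: rop_ge0.
have tp' : 0 < rvnorm t by rewrite lt_neqAle eq_sym tp t0.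
have : rvnorm t * rvnorm t <= rvnorm t * (ropnorm M * rvnorm u).
  rewrite -expr2 e; apply: le_trans h3 _; apply: le_trans h1 _.
  nra.
by rewrite ler_pM2l.
Qed.


Local Notation C := (complex R).

Lemma ReD (a b : C) : complex.Re (a + b) = complex.Re a + complex.Re b.
Proof. by case: a => ? ?; case: b. Qed.
Lemma ImD (a b : C) : complex.Im (a + b) = complex.Im a + complex.Im b.
Proof. by case: a => ? ?; case: b. Qed.
Lemma ReM (a b : C) : complex.Re (a * b) = complex.Re a * complex.Re b - complex.Im a * complex.Im b.
Proof. by case: a => ? ?; case: b. Qed.
Lemma ImM (a b : C) : complex.Im (a * b) = complex.Re a * complex.Im b + complex.Im a * complex.Re b.
Proof. by case: a => ? ?; case: b. Qed.
Lemma ReN (a : C) : complex.Re (- a) = - complex.Re a.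
Proof. by case: a. Qed.
Lemma ImN (a : C) : complex.Im (- a) = - complex.Im a.
Proof. by case: a. Qed.

Lemma Re_sum (I : finType) (F : I -> C) : complex.Re (\sum_i F i) = \sum_i complex.Re (F i).
Proof. by apply: (big_morph _ ReD). Qed.
Lemma Im_sum (I : finType) (F : I -> C) : complex.Im (\sum_i F i) = \sum_i complex.Im (F i).
Proof. by apply: (big_morph _ ImD). Qed.

Lemma mx_eqRI m n (A B : 'M[C]_(m, n)) : Remx A = Remx B -> Immx A = Immx B -> A = B.
Proof.
move=> /matrixP h1 /matrixP h2; apply/matrixP => i j.
have := h1 i j; have := h2 i j; rewrite !mxE.
by case: (A i j) => ? ?; case: (B i j) => ? ? /= -> ->.
Qed.

Lemma Remx_mul m n p (A : 'M[C]_(m, n)) (B : 'M[C]_(n, p)) :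
  Remx (A *m B) = Remx A *m Remx B - Immx A *m Immx B.
Proof.
apply/matrixP => i j; rewrite !mxE Re_sum -sumrB; apply: eq_bigr => k _.
by rewrite ReM !mxE.
Qed.

Lemma Immx_mul m n p (A : 'M[C]_(m, n)) (B : 'M[C]_(n, p)) :
  Immx (A *m B) = Remx A *m Immx B + Immx A *m Remx B.
Proof.
apply/matrixP => i j; rewrite !mxE Im_sum -big_split; apply: eq_bigr => k _.
by rewrite ImM !mxE.
Qed.

Lemma RemxD m n (A B : 'M[C]_(m, n)) : Remx (A + B) = Remx A + Remx B.
Proof. by apply/matrixP => i j; rewrite !mxE ReD. Qed.
Lemma ImmxD m n (A B : 'M[C]_(m, n)) : Immx (A + B) = Immx A + Immx B.
Proof. by apply/matrixP => i j; rewrite !mxE ImD. Qed.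
Lemma RemxN m n (A : 'M[C]_(m, n)) : Remx (- A) = - Remx A.
Proof. by apply/matrixP => i j; rewrite !mxE ReN. Qed.
Lemma ImmxN m n (A : 'M[C]_(m, n)) : Immx (- A) = - Immx A.
Proof. by apply/matrixP => i j; rewrite !mxE ImN. Qed.
Lemma Remx_cmx m n (X : 'M[R]_(m, n)) : Remx (cmx X) = X.
Proof. by apply/matrixP => i j; rewrite !mxE. Qed.
Lemma Immx_cmx m n (X : 'M[R]_(m, n)) : Immx (cmx X) = 0.
Proof. by apply/matrixP => i j; rewrite !mxE. Qed.
Lemma Remx_tr m n (A : 'M[C]_(m, n)) : Remx A^T = (Remx A)^T.
Proof. by apply/matrixP => i j; rewrite !mxE. Qed.
Lemma Immx_tr m n (A : 'M[C]_(m, n)) : Immx A^T = (Immx A)^T.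
Proof. by apply/matrixP => i j; rewrite !mxE. Qed.
Lemma Remx1 n : Remx (1%:M : 'M[C]_n) = 1%:M.
Proof. by apply/matrixP => i j; rewrite !mxE; case: (i == j). Qed.
Lemma Immx1 n : Immx (1%:M : 'M[C]_n) = 0.
Proof. by apply/matrixP => i j; rewrite !mxE; case: (i == j). Qed.
Lemma Remx0 m n : Remx (0 : 'M[C]_(m, n)) = 0.
Proof. by apply/matrixP => i j; rewrite !mxE. Qed.
Lemma Immx0 m n : Immx (0 : 'M[C]_(m, n)) = 0.
Proof. by apply/matrixP => i j; rewrite !mxE. Qed.

Lemma cmx_mul m n p (X : 'M[R]_(m, n)) (Y : 'M[R]_(n, p)) :
  cmx (X *m Y) = cmx X *m cmx Y.
Proof.
apply: mx_eqRI.
  by rewrite Remx_mul !Remx_cmx !Immx_cmx mul0mx subr0.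
by rewrite Immx_mul !Remx_cmx !Immx_cmx mul0mx mulmx0 addr0.
Qed.

Lemma cmx_tr m n (X : 'M[R]_(m, n)) : cmx X^T = (cmx X)^T.
Proof. by apply/matrixP => i j; rewrite !mxE. Qed.

Lemma nc_sq n (v : 'cV[C]_n) :
  cvnorm v ^+ 2 = rvnorm (Remx v) ^+ 2 + rvnorm (Immx v) ^+ 2.
Proof.
rewrite !nr_sq sqr_sqrtr; last by apply: sumr_ge0 => i _; rewrite addr_ge0 ?sqr_ge0.
by rewrite -big_split; apply: eq_bigr => i _; rewrite !mxE.
Qed.

Lemma nc_ge0 n (v : 'cV[C]_n) : 0 <= cvnorm v.
Proof. exact: sqrtr_ge0. Qed.

Lemma nc_geRe n (v : 'cV[C]_n) : rvnorm (Remx v) <= cvnorm v.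
Proof.
rewrite -(ler_pXn2r (n := 2)) // ?nnegrE ?nr_ge0 ?nc_ge0 // nc_sq.
by rewrite lerDl sqr_ge0.
Qed.

Lemma nc_geIm n (v : 'cV[C]_n) : rvnorm (Immx v) <= cvnorm v.
Proof.
rewrite -(ler_pXn2r (n := 2)) // ?nnegrE ?nr_ge0 ?nc_ge0 // nc_sq.
by rewrite lerDr sqr_ge0.
Qed.

Lemma nc_le n (v : 'cV[C]_n) : cvnorm v <= rvnorm (Remx v) + rvnorm (Immx v).
Proof.
rewrite -(ler_pXn2r (n := 2)) // ?nnegrE ?nc_ge0 ?addr_ge0 ?nr_ge0 // nc_sq.
have := nr_ge0 (Remx v); have := nr_ge0 (Immx v); nra.
Qed.

Lemma nc_cmx n (x : 'cV[R]_n) : cvnorm (cmx x) = rvnorm x.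
Proof.
apply/eqP; rewrite -(eqrXn2 (n := 2)) // ?nc_ge0 ?nr_ge0 //.
by rewrite nc_sq Remx_cmx Immx_cmx nr0 expr0n addr0.
Qed.

Lemma nc0 n : cvnorm (0 : 'cV[C]_n) = 0.
Proof.
have -> : (0 : 'cV[C]_n) = cmx 0 by apply/matrixP => i j; rewrite !mxE.
by rewrite nc_cmx nr0.
Qed.

Lemma nc_eq0 n (v : 'cV[C]_n) : cvnorm v = 0 -> v = 0.
Proof.
move=> h.
have h1 : rvnorm (Remx v) = 0 by apply/eqP; rewrite eq_le nr_ge0 andbT -h nc_geRe.
have h2 : rvnorm (Immx v) = 0 by apply/eqP; rewrite eq_le nr_ge0 andbT -h nc_geIm.
by apply: mx_eqRI; [rewrite Remx0 | rewrite Immx0]; exact: nr_eq0.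
Qed.

Lemma nc_gt0 n (v : 'cV[C]_n) : v != 0 -> 0 < cvnorm v.
Proof.
move=> h; rewrite lt_neqAle nc_ge0 andbT; apply/eqP => e.
by move: h; rewrite (nc_eq0 (esym e)) eqxx.
Qed.

Lemma RemxZ m n (a : R) (A : 'M[C]_(m, n)) : Remx (cR a *: A) = a *: Remx A.
Proof. by apply/matrixP => i j; rewrite !mxE; case: (A i j) => ? ? /=; ring. Qed.
Lemma ImmxZ m n (a : R) (A : 'M[C]_(m, n)) : Immx (cR a *: A) = a *: Immx A.
Proof. by apply/matrixP => i j; rewrite !mxE; case: (A i j) => ? ? /=; ring. Qed.

Lemma ncZ n (a : R) (v : 'cV[C]_n) : cvnorm (cR a *: v) = `|a| * cvnorm v.
Proof.
apply/eqP; rewrite -(eqrXn2 (n := 2)) // ?nc_ge0 ?mulr_ge0 ?nc_ge0 //.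
rewrite exprMn !nc_sq RemxZ ImmxZ !nrZ !exprMn real_normK ?num_real.
  by apply/eqP; ring.
by [].  
Qed.

Lemma nc_normalize n (v : 'cV[C]_n) : v != 0 -> cvnorm (cR (cvnorm v)^-1 *: v) = 1.
Proof.
move=> h; have p := nc_gt0 h.
by rewrite ncZ ger0_norm ?invr_ge0 ?nc_ge0 // mulVf // gt_eqF.
Qed.

Lemma cbound n (E : 'M[C]_n) : (0 < n)%N ->
  exists K, 0 <= K /\ forall w, cvnorm (E *m w) <= K * cvnorm w.
Proof.
move=> hn; set P := Remx E; set Q := Immx E.
have P0 := rop_ge0 P hn; have Q0 := rop_ge0 Q hn.
exists (2 * (ropnorm P + ropnorm Q)) ; split; first by lra.
move=> w; set a := Remx w; set b := Immx w.
have eR : Remx (E *m w) = P *m a + - (Q *m b) by rewrite Remx_mul.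
have eI : Immx (E *m w) = P *m b + Q *m a by rewrite Immx_mul addrC.
have h1 := nrD (P *m a) (- (Q *m b)); rewrite nrN -eR in h1.
have h2 := nrD (P *m b) (Q *m a); rewrite -eI in h2.
have h3 := nc_le (E *m w).
have := rop_ub P a; have := rop_ub P b; have := rop_ub Q a; have := rop_ub Q b.
have := nc_geRe w; have := nc_geIm w; rewrite -/a -/b.
have := nr_ge0 a; have := nr_ge0 b.
move=> a0 b0 ha hb q1 q2 p1 p2.
have e1 : rvnorm (Remx (E *m w)) + rvnorm (Immx (E *m w)) <= (ropnorm P + ropnorm Q) * (rvnorm a + rvnorm b) by lra.
have e2 : (ropnorm P + ropnorm Q) * (rvnorm a + rvnorm b) <= (ropnorm P + ropnorm Q) * (2 * cvnorm w).
  by apply: ler_wpM2l; lra.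
lra.
Qed.

Lemma cop_ub n (E : 'M[C]_n) w : (0 < n)%N -> cvnorm (E *m w) <= copnorm E * cvnorm w.
Proof.
move=> hn; have [->|wn0] := eqVneq w 0.
  by rewrite mulmx0 !nc0 mulr0.
have p := nc_gt0 wn0.
have [K [K0 HK]] := cbound E hn.
have : cvnorm (E *m (cR (cvnorm w)^-1 *: w)) <= copnorm E.
  rewrite /copnorm; apply: (sup_ub_gen (f := fun t => cvnorm (E *m t)) (K := K)); last by rewrite /= nc_normalize.
  by move=> t /= ht; rewrite -[K]mulr1 -ht; apply: HK.
rewrite -scalemxAr ncZ ger0_norm ?invr_ge0 ?nc_ge0 // => h.
by rewrite -ler_pdivrMr // mulrC.
Qed.


Lemma quad n (M : 'M[R]_n) (x : 'cV[R]_n) : (x^T *m M *m x) 0 0 = dot (M *m x) x.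
Proof. by rewrite -mulmxA mxE /dot; apply: eq_bigr => j _; rewrite mxE mulrC. Qed.

Lemma quadD n (X Y : 'M[R]_n) d (x : 'cV[R]_n) :
  (x^T *m (d *: X + Y) *m x) 0 0 = d * (x^T *m X *m x) 0 0 + (x^T *m Y *m x) 0 0.
Proof. by rewrite mulmxDr mulmxDl -scalemxAr -scalemxAl !mxE. Qed.

Lemma quadB n (X Y : 'M[R]_n) d (x : 'cV[R]_n) :
  (x^T *m (d *: X - Y) *m x) 0 0 = d * (x^T *m X *m x) 0 0 - (x^T *m Y *m x) 0 0.
Proof. by rewrite mulmxBr mulmxBl -scalemxAr -scalemxAl !mxE. Qed.

Lemma Re_bil n (u : 'cV[C]_n) x : complex.Re (bil u (cmx x)) = dot (Remx u) x.
Proof.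
rewrite /bil Re_sum /dot; apply: eq_bigr => j _; rewrite ReM !mxE /=; ring.
Qed.

Lemma Im_bil n (u : 'cV[C]_n) x : complex.Im (bil u (cmx x)) = dot (Immx u) x.
Proof.
rewrite /bil Im_sum /dot; apply: eq_bigr => j _; rewrite ImM !mxE /=; ring.
Qed.

Lemma Remx_mulR m n p (A : 'M[C]_(m, n)) (X : 'M[R]_(n, p)) : Remx (A *m cmx X) = Remx A *m X.
Proof. by rewrite Remx_mul Remx_cmx Immx_cmx mulmx0 subr0. Qed.
Lemma Immx_mulR m n p (A : 'M[C]_(m, n)) (X : 'M[R]_(n, p)) : Immx (A *m cmx X) = Immx A *m X.
Proof. by rewrite Immx_mul Remx_cmx Immx_cmx mulmx0 add0r. Qed.
Lemma Remx_Rmul m n p (X : 'M[R]_(m, n)) (A : 'M[C]_(n, p)) : Remx (cmx X *m A) = X *m Remx A.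
Proof. by rewrite Remx_mul Remx_cmx Immx_cmx mul0mx subr0. Qed.
Lemma Immx_Rmul m n p (X : 'M[R]_(m, n)) (A : 'M[C]_(n, p)) : Immx (cmx X *m A) = X *m Immx A.
Proof. by rewrite Immx_mul Remx_cmx Immx_cmx mul0mx addr0. Qed.

Lemma partA n (d : R) (B : 'M[C]_n) : B^T = B ->
  (Mplus d B <-> forall x : 'cV[R]_n, x != 0 -> Nplus d (bil (B *m cmx x) (cmx x))).
Proof.
move=> hB; rewrite /Mplus /Nplus /=.
have eR x : complex.Re (bil (B *m cmx x) (cmx x)) = (x^T *m Remx B *m x) 0 0.
  by rewrite Re_bil Remx_mulR quad.
have eI x : complex.Im (bil (B *m cmx x) (cmx x)) = (x^T *m Immx B *m x) 0 0.
  by rewrite Im_bil Immx_mulR quad.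
split.
  move=> [_ [h1 h2]] x xn0; rewrite eR eI ltr_norml.
  have := h1 x xn0; have := h2 x xn0; rewrite quadB quadD => a b.
  by apply/andP; split; lra.
move=> H; split => //; split => v vn0; have := H v vn0; rewrite eR eI ltr_norml => /andP [a b].
  by rewrite quadD; lra.
by rewrite quadB; lra.
Qed.

Lemma partC n (e : R) (z : 'cV[C]_n) : 0 < e -> e <= 1/2 -> Vd e z -> Nplus (4 * e) (bil z z).
Proof.
move=> e0 e1; rewrite /Vd /Nplus /= => hz.
set a := Remx z; set b := Immx z.
have eR : complex.Re (bil z z) = rvnorm a ^+ 2 - rvnorm b ^+ 2.
  rewrite /bil Re_sum !nr_sq -sumrB; apply: eq_bigr => j _; rewrite ReM !mxE; ring.
have eI : complex.Im (bil z z) = 2 * dot a b.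
  rewrite /bil Im_sum /dot mulr_sumr; apply: eq_bigr => j _; rewrite ImM !mxE; ring.
rewrite eR eI normrM ger0_norm //.
have hd := dot_le a b.
have A0 := nr_ge0 a; have B0 := nr_ge0 b.
move: hz; rewrite -/a -/b => hz.
have Ap : 0 < rvnorm a by nra.
have s1 : rvnorm a * rvnorm b < e * rvnorm a ^+ 2 by rewrite expr2; nra.
have s2 : rvnorm b ^+ 2 <= e ^+ 2 * rvnorm a ^+ 2 by rewrite !expr2; nra.
have s3 : e ^+ 2 <= 1/4 by rewrite expr2; nra.
have s4 : e * (e ^+ 2 * rvnorm a ^+ 2) <= e * (1/4 * rvnorm a ^+ 2).
  by apply: ler_wpM2l; [lra | apply: ler_wpM2r => //; exact: sqr_ge0].
have s5 : e * rvnorm b ^+ 2 <= e * (e ^+ 2 * rvnorm a ^+ 2) by apply: ler_wpM2l => //; lra.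
nra.
Qed.


Lemma cop_ge0 n (E : 'M[C]_n) : (0 < n)%N -> 0 <= copnorm E.
Proof.
move=> hn; have [u hu] := unit_exists hn.
have := cop_ub E (cmx u) hn; rewrite nc_cmx hu mulr1; apply: le_trans; exact: nc_ge0.
Qed.

Lemma ropRe n (E : 'M[C]_n) : (0 < n)%N -> ropnorm (Remx E) <= copnorm E.
Proof.
move=> hn; apply: rop_le => // v; rewrite -Remx_mulR -(nc_cmx v).
apply: le_trans (nc_geRe _) _; exact: cop_ub.
Qed.

Lemma ropIm n (E : 'M[C]_n) : (0 < n)%N -> ropnorm (Immx E) <= copnorm E.
Proof.
move=> hn; apply: rop_le => // v; rewrite -Immx_mulR -(nc_cmx v).
apply: le_trans (nc_geIm _) _; exact: cop_ub.
Qed.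

Lemma partB n (e : R) (h : 'M[C]_n) (x : 'cV[R]_n) : (0 < n)%N -> 0 < e -> e <= 1/2 ->
  Ed e h -> x != 0 -> Vd (2 * e) (h^T *m cmx x).
Proof.
move=> hn e0 e1 [g [p [dg pu hp ->]]] xn0.
set w := g^T *m x.
have wn0 : w != 0.
  apply/negP => /eqP w0; move/negP: xn0; apply.
  have gu : g^T \in unitmx by rewrite unitmxE unitfE det_tr gt_eqF.
  by rewrite -(mulKmx gu x) -/w w0 mulmx0.
have -> : (cmx g *m p)^T *m cmx x = p^T *m cmx w by rewrite trmx_mul -cmx_tr -mulmxA -cmx_mul.
set E := p - 1%:M.
have pE : p = E + 1%:M by rewrite /E subrK.
rewrite /Vd /= Remx_mulR Immx_mulR Remx_tr Immx_tr pE RemxD ImmxD Remx1 Immx1 addr0 raddfD /= trmx1 mulmxDl mul1mx.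
set c := copnorm E.
have h1 : rvnorm ((Immx E)^T *m w) <= c * rvnorm w.
  apply: le_trans (rop_tr _ _ hn) _; apply: ler_wpM2r; [exact: nr_ge0 | exact: ropIm].
have h2 : rvnorm ((Remx E)^T *m w) <= c * rvnorm w.
  apply: le_trans (rop_tr _ _ hn) _; apply: ler_wpM2r; [exact: nr_ge0 | exact: ropRe].
have h3 : rvnorm w - rvnorm ((Remx E)^T *m w) <= rvnorm ((Remx E)^T *m w + w).
  by rewrite [_ + w]addrC; exact: nrB.
have wp := nr_gt0 wn0.
have c0 : c < e by [].
have s1 : rvnorm w * (1 - c) <= rvnorm ((Remx E)^T *m w + w) by lra.
have s2 : c * rvnorm w < e * rvnorm w by rewrite ltr_pM2r.
have s3 : e * rvnorm w <= 2 * e * (rvnorm w * (1 - c)).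
  have t : 0 <= e * rvnorm w * (1 - 2 * c).
    by apply: mulr_ge0; [apply: mulr_ge0; lra | lra].
  nra.
have s4 : 2 * e * (rvnorm w * (1 - c)) <= 2 * e * rvnorm ((Remx E)^T *m w + w).
  by apply: ler_wpM2l => //; lra.
lra.
Qed.


Lemma bil_tr n (M : 'M[C]_n) u v : bil (M *m u) v = bil u (M^T *m v).
Proof.
rewrite /bil; under eq_bigr => i _ do rewrite mxE mulr_suml.
under [RHS]eq_bigr => i _ do rewrite mxE mulr_sumr.
rewrite exchange_big; apply: eq_bigr => i _; apply: eq_bigr => j _; rewrite mxE.
by ring.
Qed.

Lemma partD n (e : R) (h : 'M[C]_n) : (0 < n)%N -> 0 < e -> e <= 1/4 ->
  Ed e h -> Mplus (8 * e) (h *m h^T).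
Proof.
move=> hn e0 e1 hE.
apply/partA; first by rewrite trmx_mul trmxK.
move=> x xn0; rewrite -mulmxA bil_tr.
have hV := partB hn e0 (ltac:(lra)) hE xn0.
have := partC (ltac:(lra) : 0 < 2 * e) (ltac:(lra)) hV.
by have -> : 4 * (2 * e) = 8 * e by ring.
Qed.


Lemma rop_add n (M N : 'M[R]_n) : (0 < n)%N -> ropnorm (M + N) <= ropnorm M + ropnorm N.
Proof.
move=> hn; apply: rop_le => // v; rewrite mulmxDl mulrDl.
apply: le_trans (nrD _ _) _; apply: lerD; exact: rop_ub.
Qed.

Lemma rop_opp n (M : 'M[R]_n) : (0 < n)%N -> ropnorm (- M) <= ropnorm M.
Proof. by move=> hn; apply: rop_le => // v; rewrite mulNmx nrN; exact: rop_ub. Qed.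

Lemma cvec_bound n (A : 'M[C]_n) u : (0 < n)%N ->
  rvnorm (Remx (A *m u)) <= (ropnorm (Remx A) + ropnorm (Immx A)) * cvnorm u /\
  rvnorm (Immx (A *m u)) <= (ropnorm (Remx A) + ropnorm (Immx A)) * cvnorm u.
Proof.
move=> hn; set P := Remx A; set Q := Immx A; set a := Remx u; set b := Immx u.
have P0 := rop_ge0 P hn; have Q0 := rop_ge0 Q hn.
have eR : Remx (A *m u) = P *m a + - (Q *m b) by rewrite Remx_mul.
have eI : Immx (A *m u) = P *m b + Q *m a by rewrite Immx_mul addrC.
have h1 := nrD (P *m a) (- (Q *m b)); rewrite nrN -eR in h1.
have h2 := nrD (P *m b) (Q *m a); rewrite -eI in h2.
have := rop_ub P a; have := rop_ub P b; have := rop_ub Q a; have := rop_ub Q b.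
have := nc_geRe u; have := nc_geIm u; rewrite -/a -/b.
move=> ha hb q1 q2 p1 p2.
have t1 : ropnorm P * rvnorm a <= ropnorm P * cvnorm u by apply: ler_wpM2l.
have t2 : ropnorm P * rvnorm b <= ropnorm P * cvnorm u by apply: ler_wpM2l.
have t3 : ropnorm Q * rvnorm a <= ropnorm Q * cvnorm u by apply: ler_wpM2l.
have t4 : ropnorm Q * rvnorm b <= ropnorm Q * cvnorm u by apply: ler_wpM2l.
split; lra.
Qed.

Lemma rop_AE n (A E : 'M[C]_n) : (0 < n)%N ->
  ropnorm (Remx (A *m E)) <= (ropnorm (Remx A) + ropnorm (Immx A)) * copnorm E /\
  ropnorm (Immx (A *m E)) <= (ropnorm (Remx A) + ropnorm (Immx A)) * copnorm E.
Proof.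
move=> hn; have S0 : 0 <= ropnorm (Remx A) + ropnorm (Immx A) by rewrite addr_ge0 ?rop_ge0.
split; apply: rop_le => // v; rewrite -?Remx_mulR -?Immx_mulR -mulmxA;
  have [c1 c2] := cvec_bound A (E *m cmx v) hn;
  have c3 := cop_ub E (cmx v) hn; rewrite nc_cmx in c3;
  rewrite -mulrA; [apply: le_trans c1 _ | apply: le_trans c2 _]; exact: ler_wpM2l.
Qed.

Lemma rop_EA n (A E : 'M[C]_n) : (0 < n)%N ->
  ropnorm (Remx (E *m A)) <= copnorm E * (ropnorm (Remx A) + ropnorm (Immx A)) /\
  ropnorm (Immx (E *m A)) <= copnorm E * (ropnorm (Remx A) + ropnorm (Immx A)).
Proof.
move=> hn; have c0 := cop_ge0 E hn.
have key v : cvnorm (E *m (A *m cmx v)) <= copnorm E * (ropnorm (Remx A) + ropnorm (Immx A)) * rvnorm v.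
  apply: le_trans (cop_ub _ _ hn) _; rewrite -mulrA; apply: ler_wpM2l => //.
  apply: le_trans (nc_le _) _; rewrite Remx_mulR Immx_mulR mulrDl.
  by apply: lerD; exact: rop_ub.
split; apply: rop_le => // v; rewrite -?Remx_mulR -?Immx_mulR -mulmxA;
  [apply: le_trans (nc_geRe _) _ | apply: le_trans (nc_geIm _) _]; exact: key.
Qed.

Lemma arithE (e x y Rr I r1 i1 q : R) : 0 < e -> e <= 1/4 -> 0 <= x -> 0 <= y -> y < e*x ->
  I <= y + i1 -> i1 <= q -> x <= Rr + r1 -> r1 <= q -> q <= (x + e*x)*e -> I < 6*e*Rr.
Proof.
move=> e0 e1 x0 y0 hy h1 h2 h3 h4 h5.
have ex0 : 0 <= e * x by apply: mulr_ge0; lra.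
have s1 : e * (e * x) <= 1/4 * (e * x) by apply: ler_wpM2r.
have s2 : q <= 5/4 * (e * x) by lra.
have s3 : 6 * e * (x - q) <= 6 * e * Rr by apply: ler_wpM2l; lra.
have s4 : e * q <= e * (5/4 * (e * x)) by apply: ler_wpM2l; lra.
lra.
Qed.

Lemma genE n (X Y R1 I1 : 'M[R]_n) (e c : R) : (0 < n)%N -> 0 < e -> e <= 1/4 ->
  ropnorm Y < e * ropnorm X -> 0 <= c -> c < e ->
  ropnorm R1 <= (ropnorm X + ropnorm Y) * c -> ropnorm I1 <= (ropnorm X + ropnorm Y) * c ->
  ropnorm (Y + I1) < 6 * e * ropnorm (X + R1).
Proof.
move=> hn e0 e1 hA c0 hc hR hI.
have x0 := rop_ge0 X hn; have y0 := rop_ge0 Y hn.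
have t1 : ropnorm (Y + I1) <= ropnorm Y + ropnorm I1 by exact: rop_add.
have t2 : ropnorm X <= ropnorm (X + R1) + ropnorm R1.
  have := rop_add (X + R1) (- R1) hn; rewrite addrK => t.
  by apply: le_trans t _; rewrite lerD2l rop_opp.
have t3 : (ropnorm X + ropnorm Y) * c <= (ropnorm X + ropnorm Y) * e.
  by apply: ler_wpM2l; [exact: addr_ge0 x0 y0 | exact: ltW hc].
have t4 : (ropnorm X + ropnorm Y) * e <= (ropnorm X + e * ropnorm X) * e.
  by apply: ler_wpM2r; [exact: ltW e0 | rewrite lerD2l ltW].
have t5 := le_trans t3 t4.
exact: (arithE e0 e1 x0 y0 hA t1 hI t2 hR t5).
Qed.

Lemma partE n (e : R) (A B : 'M[C]_n) : (0 < n)%N -> 0 < e -> e <= 1/4 ->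
  Md e A -> copnorm (B - 1%:M) < e -> Md (6 * e) (A *m B) /\ Md (6 * e) (B *m A).
Proof.
move=> hn e0 e1; rewrite /Md /= => hA hB.
have c0 := cop_ge0 (B - 1%:M) hn.
have BE : B = (B - 1%:M) + 1%:M by rewrite subrK.
split.
  rewrite [in A *m B]BE mulmxDr mulmx1 RemxD ImmxD [Immx (A *m _) + _]addrC [Remx (A *m _) + _]addrC.
  have [h1 h2] := rop_AE A (B - 1%:M) hn.
  exact: (genE hn e0 e1 hA c0 hB h1 h2).
rewrite [in B *m A]BE mulmxDl mul1mx RemxD ImmxD [Immx (_ *m A) + _]addrC [Remx (_ *m A) + _]addrC.
have [h1 h2] := rop_EA A (B - 1%:M) hn.
rewrite mulrC in h1; rewrite mulrC in h2.
exact: (genE hn e0 e1 hA c0 hB h1 h2).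
Qed.


Lemma orth_nr n (M : 'M[R]_n) v : M^T *m M = 1%:M -> rvnorm (M *m v) = rvnorm v.
Proof.
move=> hM; apply/eqP; rewrite -(eqrXn2 (n := 2)) ?nr_ge0 // !nr_dot.
have := dot_tr (M^T) v (M *m v); rewrite trmxK mulmxA hM mul1mx => ->.
by [].
Qed.

Lemma rop_mulO n (X M : 'M[R]_n) : (0 < n)%N -> M^T *m M = 1%:M -> ropnorm (X *m M) = ropnorm X.
Proof.
move=> hn hM; have hM2 : M *m M^T = 1%:M by apply: mulmx1C.
have hM3 : M^T^T *m M^T = 1%:M by rewrite trmxK.
apply/eqP; rewrite eq_le; apply/andP; split; apply: rop_le => // v.
  by rewrite -mulmxA -(orth_nr v hM); exact: rop_ub.
have -> : X *m v = X *m M *m (M^T *m v) by rewrite -mulmxA (mulmxA M) hM2 mul1mx.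
by rewrite -(orth_nr v hM3); exact: rop_ub.
Qed.

Lemma rop_Omul n (X M : 'M[R]_n) : (0 < n)%N -> M^T *m M = 1%:M -> ropnorm (M *m X) = ropnorm X.
Proof.
move=> hn hM.
apply/eqP; rewrite eq_le; apply/andP; split; apply: rop_le => // v.
  by rewrite -mulmxA orth_nr //; exact: rop_ub.
by rewrite -(orth_nr (X *m v) hM) mulmxA; exact: rop_ub.
Qed.

Lemma partF n (e : R) (A : 'M[C]_n) (B : 'M[R]_n) : (0 < n)%N ->
  Md e A -> SOn B -> Md e (A *m cmx B) /\ Md e (cmx B *m A).
Proof.
move=> hn; rewrite /Md /SOn /= => hA [hB _].
rewrite Remx_mulR Immx_mulR Remx_Rmul Immx_Rmul (rop_mulO (Remx A) hn hB) (rop_mulO (Immx A) hn hB).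
by rewrite (rop_Omul (Remx A) hn hB) (rop_Omul (Immx A) hn hB).
Qed.

Lemma Vd_mono n e1 e2 (z : 'cV[C]_n) : e1 <= e2 -> Vd e1 z -> Vd e2 z.
Proof.
rewrite /Vd /= => h1 h2; apply: lt_le_trans h2 _; apply: ler_wpM2r => //; exact: nr_ge0.
Qed.

Lemma Nplus_mono e1 e2 (z : C) : 0 < e1 -> e1 <= e2 -> Nplus e1 z -> Nplus e2 z.
Proof.
rewrite /Nplus /= => e0 h1 h2.
have : 0 < e1 * complex.Re z by apply: le_lt_trans h2; exact: normr_ge0.
rewrite pmulr_rgt0 // => hr.
apply: lt_le_trans h2 _; apply: ler_wpM2r => //; exact: ltW.
Qed.

Lemma Md_mono n e1 e2 (A : 'M[C]_n) : (0 < n)%N -> e1 <= e2 -> Md e1 A -> Md e2 A.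
Proof.
rewrite /Md /= => hn h1 h2; apply: lt_le_trans h2 _; apply: ler_wpM2r => //; exact: rop_ge0.
Qed.

End Basic.

Unset Implicit Arguments.

Theorem lemma6p1 (R : realType) (n : nat) (hn : (1 <= n)%N) :
  exists (C d0 : R), 0 < C /\ 0 < d0 /\
  forall d : R, 0 < d -> d < d0 ->
  (
   (* (a) *)
   (forall B : 'M[complex R]_n, B^T = B ->
      (Mplus d B <-> forall x : 'cV[R]_n, x != 0 ->
                       Nplus d (bil (B *m cmx x) (cmx x)))) /\
   (* (b) *)
   (forall (h : 'M[complex R]_n) (x : 'cV[R]_n), Ed d h -> x != 0 ->
      Vd (C * d) (h^T *m cmx x)) /\
   (* (c) *)
   (forall z : 'cV[complex R]_n, Vd d z -> z != 0 -> Nplus (C * d) (bil z z)) /\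
   (* (d) *)
   (forall h : 'M[complex R]_n, Ed d h -> Mplus (C * d) (h *m h^T)) /\
   (* (e) *)
   (forall A B : 'M[complex R]_n, Md d A -> copnorm (B - 1%:M) < d ->
      Md (C * d) (A *m B) /\ Md (C * d) (B *m A)) /\
   (* (f) *)
   (forall (A : 'M[complex R]_n) (B : 'M[R]_n), Md d A -> SOn B ->
      Md (C * d) (A *m cmx B) /\ Md (C * d) (cmx B *m A))).
Proof.
exists 8, (1/4); split; first by lra.
split; first by lra.
move=> d d0 d1.
have d1' : d <= 1/4 by lra.
split; first by move=> B hB; exact: partA.
split.
  move=> h x hE xn0; apply: (@Vd_mono _ _ (2 * d)); first by lra.
  by apply: partB => //; lra.
split.
  move=> z hz _; apply: (@Nplus_mono _ (4 * d)); [lra | lra |].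
  by apply: partC => //; lra.
split; first by move=> h hE; exact: partD.
split.
  move=> A B hA hB; have [h1 h2] := partE hn d0 d1' hA hB.
  by split; apply: (@Md_mono _ _ (6 * d)) => //; lra.
move=> A B hA hB; have [h1 h2] := partF hn hA hB.
by split; apply: (@Md_mono _ _ d) => //; lra.
Qed.
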